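(* Let $w$ be a permutation with $\{k,k+1\}\subseteq\textsf{supp}(w)$. Then exactly one of the following holds: (i) $w$ has a reduced word of the form $\cdots k\cdots(k+1)\cdots k\cdots$ or of the form $\cdots(k+1)\cdots k\cdots(k+1)\cdots$; (ii) $w$ has a reduced word of the form (a word in letters $\le k$)(a word in letters $\ge k+1$) or of the form (a word in letters $\ge k+1$)(a word in letters $\le k$).
   Context: $\sigma_i=(i,i+1)$; reduced words are sequences of subscripts of reduced expressions of a permutation as products of the $\sigma_i$. $\textsf{supp}(w)$ is the set of letters appearing in reduced words of $w$. *)

(* Defs.v *)
From mathcomp Require Import all_boot all_fingroup.
Set Implicit Arguments. Unset Strict Implicit. Unset Printing Implicit Defensive.

Local Open Scope group_scope.

(* Simple transposition sigma_i = (i, i+1), letters i numbered 1..n-1 acting on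
   {1..n}; since 'I_n = {0..n-1}, sigma_i swaps the ordinals i-1 and i.
   (For letters outside 1..n-1 the value is irrelevant: words are required to be valid.) *)
Definition sigma (n i : nat) : 'S_n :=
  match (insub i.-1 : option 'I_n), (insub i : option 'I_n) with
  | Some a, Some b => tperm a b
  | _, _ => 1
  end.

Definition valid_word (n : nat) (a : seq nat) : bool :=
  all (fun i => (0 < i) && (i < n)) a.

Definition word_perm (n : nat) (a : seq nat) : 'S_n :=
  \prod_(i <- a) sigma n i.

Definition reduced_word (n : nat) (w : 'S_n) (a : seq nat) : Prop :=
  [/\ valid_word n a, word_perm n a = w &
      forall b, valid_word n b -> word_perm n b = w -> size a <= size b].

Definition supp (n : nat) (w : 'S_n) (i : nat) : Prop :=
  exists a, reduced_word w a /\ i \in a.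

(* Main.v *)
Require Import Defs.
From mathcomp Require Import all_boot all_fingroup zify.
From Stdlib Require Import Classical_Prop.
Set Implicit Arguments. Unset Strict Implicit. Unset Printing Implicit Defensive.
Local Open Scope group_scope.

Lemma card_lt (n m : nat) : m <= n -> #|[set j : 'I_n | j < m]| = m.
Proof.
move=> h.
have -> : [set j : 'I_n | j < m] = [set widen_ord h j | j in 'I_m].
  apply/setP => j; rewrite !inE; apply/idP/imsetP.
  - move=> hj; exists (Ordinal hj) => //; exact: val_inj.
  - by case=> i _ ->; rewrite /= ltn_ord.
by rewrite card_imset ?card_ord //; move=> a b /(congr1 val) /= /val_inj.
Qed.

Lemma sigmaE n i : 0 < i < n -> exists A B : 'I_n,
  [/\ (A : nat) = i.-1, (B : nat) = i & sigma n i = tperm A B].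
Proof.
move=> /andP[h0 h1].
have h2 : i.-1 < n by lia.
exists (Ordinal h2), (Ordinal h1); split => //.
rewrite /sigma; case: insubP => [a _ ha|]; last by rewrite h2.
case: insubP => [b _ hb|]; last by rewrite h1.
by congr tperm; apply: val_inj.
Qed.

Lemma sigma_invalid n i : ~~ (0 < i < n) -> sigma n i = 1.
Proof.
move=> h; rewrite /sigma; case: insubP => [a ha|//]; case: insubP => [b hb|//].
have ei : i = 0 by move: h; rewrite hb; lia.
move=> hb' ha'; have -> : a = b by apply: val_inj; rewrite ha' hb' ei.
exact: tperm1.
Qed.

Lemma ov n (a b : 'I_n) : (a == b) = (nat_of_ord a == nat_of_ord b).
Proof. by []. Qed.
Lemma neqv n (a b : 'I_n) : a <> b -> nat_of_ord a <> nat_of_ord b.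
Proof. by move=> h /val_inj. Qed.
Lemma eqv n (a b : 'I_n) : a = b -> nat_of_ord a = nat_of_ord b.
Proof. by move=> ->. Qed.
Ltac ordnat := repeat match goal with
  | H : _ = _ |- _ => move: (eqv H); clear H; move=> ?
  | H : not (_ = _) |- _ => move: (neqv H); clear H; move=> ?
  end.
Ltac tcase := case: tpermP => [->|->|/neqv ? /neqv ?].

Lemma tperm_lt n (A B P Q : 'I_n) : (B = A.+1 :> nat) -> P != Q ->
  ~~ ((P == A) && (Q == B)) -> ~~ ((P == B) && (Q == A)) ->
  (tperm A B P < tperm A B Q) = (P < Q).
Proof.
rewrite !ov => hAB; tcase; tcase; lia.
Qed.

Lemma sigma_comm n x y : y.+2 <= x -> commute (sigma n x) (sigma n y).
Proof.
move=> hxy.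
case hx: (0 < x < n); last by rewrite sigma_invalid ?hx //; exact: commute_sym (commute1 _).
case hy: (0 < y < n); last by rewrite (sigma_invalid (i:=y)) ?hy //; exact: commute1.
have [A [B [hA hB ->]]] := sigmaE hx.
have [C [D [hC hD ->]]] := sigmaE hy.
apply/permP => z; rewrite !permM.
case: (tpermP C D z) => [?|?|? ?]; case: (tpermP A B z) => [?|?|? ?]; repeat (case: tpermP => [?|?|? ?]); ordnat; try lia.
all: try (apply: val_inj => /=; lia).
Qed.

Definition inv n (p : 'S_n) :=
  #|[set xy : 'I_n * 'I_n | (xy.1 < xy.2) && (p xy.2 < p xy.1)]|.

Lemma permEq n (p : 'S_n) y A : (p y == A) = (y == p^-1 A).
Proof. by rewrite -{1}(permKV p A) (inj_eq (@perm_inj _ p)). Qed.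

Lemma inv_mem n (p : 'S_n) (A B : 'I_n) (x y : 'I_n) : B = A.+1 :> nat ->
  x < y -> ~~ ((x == p^-1 A) && (y == p^-1 B)) -> ~~ ((x == p^-1 B) && (y == p^-1 A)) ->
  ((p * tperm A B)%g y < (p * tperm A B)%g x) = (p y < p x).
Proof.
move=> hAB hxy h1 h2; rewrite !permM; apply: tperm_lt => //.
- rewrite (inj_eq (@perm_inj _ p)); apply/eqP => e; move: hxy; rewrite e; lia.
- by rewrite !permEq andbC.
- by rewrite !permEq andbC.
Qed.

Lemma inv_step n (p : 'S_n) (A B : 'I_n) : B = A.+1 :> nat ->
  if (p^-1 A < p^-1 B) then inv (p * tperm A B)%g = (inv p).+1
  else (inv (p * tperm A B)%g).+1 = inv p.
Proof.
move=> hAB.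
have hx0 : p (p^-1 A) = A by rewrite permKV.
have hy0 : p (p^-1 B) = B by rewrite permKV.
have hne : p^-1 A != p^-1 B.
  by apply/eqP => /(congr1 p); rewrite hx0 hy0 => /eqv; lia.
case: ltnP => hlt.
- rewrite /inv (_ : [set _ | _] = (p^-1 A, p^-1 B) |:
      [set xy : 'I_n * 'I_n | (xy.1 < xy.2) && (p xy.2 < p xy.1)]).
    by rewrite cardsU1 inE /= hlt hx0 hy0 hAB; lia.
  apply/setP => [[x y]]; rewrite !inE /= xpair_eqE.
  case: ltnP => hxy /=; last first.
    by rewrite ?orbF; apply/esym/negbTE; apply/negP => /andP[/eqP ex /eqP ey]; move: hxy; rewrite ex ey; lia.
  case: (boolP ((x == p^-1 A) && (y == p^-1 B))) => [/andP[/eqP -> /eqP ->]|h1] /=.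
    by rewrite !permM hx0 hy0 tpermL tpermR hAB; lia.
  rewrite inv_mem //; apply/negP => /andP[/eqP ex /eqP ey]; move: hxy hlt; rewrite ex ey; lia.
- have hlt' : p^-1 B < p^-1 A.
    by rewrite ltn_neqAle hlt andbT; apply: contra hne; rewrite eq_sym => /eqP/val_inj ->.
  rewrite /inv (_ : [set xy : 'I_n * 'I_n | (xy.1 < xy.2) && (p xy.2 < p xy.1)] = (p^-1 B, p^-1 A) |:
      [set xy : 'I_n * 'I_n | (xy.1 < xy.2) && ((p * tperm A B)%g xy.2 < (p * tperm A B)%g xy.1)]).
    by rewrite cardsU1 inE /= hlt' !permM hx0 hy0 tpermL tpermR hAB; lia.
  apply/setP => [[x y]]; rewrite !inE /= xpair_eqE.
  case: ltnP => hxy /=; last first.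
    by rewrite ?orbF; apply/esym/negbTE; apply/negP => /andP[/eqP ex /eqP ey]; move: hxy; rewrite ex ey; lia.
  case: (boolP ((x == p^-1 B) && (y == p^-1 A))) => [/andP[/eqP -> /eqP ->]|h1] /=.
    by rewrite hx0 hy0 hAB; lia.
  rewrite inv_mem //; apply/negP => /andP[/eqP ex /eqP ey]; move: hxy hlt'; rewrite ex ey; lia.
Qed.

Definition asc n (p : 'S_n) i := forall x y : 'I_n,
  p x = i.-1 :> nat -> p y = i :> nat -> x < y.

Lemma asc_iff n (p : 'S_n) i (A B : 'I_n) : A = i.-1 :> nat -> B = i :> nat ->
  asc p i <-> p^-1 A < p^-1 B.
Proof.
move=> hA hB; split.
- by move=> h; apply: h; rewrite permKV.
- move=> h x y hx hy.
  have -> : x = p^-1 A by rewrite -(permK p x); congr (p^-1 _); apply: val_inj; rewrite /= hx.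
  have -> : y = p^-1 B by rewrite -(permK p y); congr (p^-1 _); apply: val_inj; rewrite /= hy.
  exact: h.
Qed.

Lemma wp_nil n : word_perm n [::] = 1.
Proof. by rewrite /word_perm big_nil. Qed.
Lemma wp_cons n i a : word_perm n (i :: a) = sigma n i * word_perm n a.
Proof. by rewrite /word_perm big_cons. Qed.
Lemma wp_cat n a b : word_perm n (a ++ b) = word_perm n a * word_perm n b.
Proof. by rewrite /word_perm big_cat. Qed.
Lemma wp_rcons n a i : word_perm n (rcons a i) = word_perm n a * sigma n i.
Proof. by rewrite -cats1 wp_cat wp_cons wp_nil mulg1. Qed.

Lemma inv1 n : inv (1 : 'S_n) = 0.
Proof.
rewrite /inv (_ : [set _ | _] = set0) ?cards0 //.
by apply/setP => [[x y]]; rewrite !inE /= !perm1; apply/negbTE/negP => /andP[]; lia.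
Qed.

Lemma inv_sigma n (p : 'S_n) i : 0 < i < n -> inv (p * sigma n i) <= (inv p).+1.
Proof.
move=> hi; have [A [B [hA hB ->]]] := sigmaE hi.
have hAB : B = A.+1 :> nat by rewrite hA hB; case: (i) hi.
by have := inv_step p hAB; case: ifP => _ h; lia.
Qed.

Lemma inv_le_gen n (p : 'S_n) d : valid_word n d -> inv (p * word_perm n d) <= inv p + size d.
Proof.
elim: d p => [|i d IH] p /=; first by rewrite wp_nil mulg1 addn0.
move=> /andP[hi hd]; rewrite wp_cons mulgA.
apply: leq_trans (IH _ hd) _; have := inv_sigma p hi; by move=> h; rewrite -addSnnS leq_add2r.
Qed.

Lemma inv_le n d : valid_word n d -> inv (word_perm n d) <= size d.
Proof. by move=> h; have := inv_le_gen 1 h; rewrite mul1g inv1. Qed.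

Lemma mono_ge n (f : 'I_n -> 'I_n) : (forall x y : 'I_n, x < y -> f x < f y) ->
  forall x : 'I_n, x <= f x.
Proof.
move=> hf x; move: {2}(nat_of_ord x) (erefl (nat_of_ord x)) => m.
elim: m x => [|m IH] x hx; first by rewrite hx.
have hm : m < n by have := ltn_ord x; lia.
have := hf (Ordinal hm) x; rewrite hx /= => /(_ (ltnSn m)).
have := IH (Ordinal hm) erefl; by move=> h1 h2; exact: (leq_ltn_trans h1 h2).
Qed.

Lemma inv0 n (p : 'S_n) : inv p = 0 -> p = 1.
Proof.
move=> h0.
have hno : forall x y : 'I_n, x < y -> p x < p y.
  move=> x y hxy; have : (x, y) \notin [set xy : 'I_n * 'I_n | (xy.1 < xy.2) && (p xy.2 < p xy.1)].
    by apply/negP => hin; move: h0; rewrite /inv (cardsD1 (x, y)) hin.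
  rewrite inE /= hxy /= -leqNgt leq_eqVlt => /orP[/eqP/val_inj/perm_inj e|//].
  by move: hxy; rewrite e ltnn.
have hno' : forall x y : 'I_n, x < y -> p^-1 x < p^-1 y.
  move=> x y hxy; case: (ltngtP (p^-1 x) (p^-1 y)) => // [h|/val_inj e].
  - by have := hno _ _ h; rewrite !permKV => /(ltn_trans hxy); rewrite ltnn.
  - by move: hxy; rewrite -(permKV p x) e permKV ltnn.
apply/permP => x; rewrite perm1; apply: val_inj => /=; apply/eqP; rewrite eqn_leq.
have := mono_ge hno x; have := mono_ge hno' (p x); rewrite permK => -> ->; done.
Qed.

Lemma nat_descent (f : nat -> nat) P Q : P < Q -> f Q < f P ->
  exists j, [/\ P <= j, j < Q & f j.+1 < f j].
Proof.
elim: Q => [//|Q IH] hPQ hf.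
case: (ltnP (f Q.+1) (f Q)) => h; first by exists Q; split => //; lia.
have hPQ' : P <= Q by lia.
move: hPQ'; rewrite leq_eqVlt => /orP[/eqP e|hlt].
  by move: hf h; rewrite e; lia.
have [j [h1 h2 h3]] := IH hlt (leq_ltn_trans h hf).
by exists j; split => //; lia.
Qed.

Lemma descent n (p : 'S_n) : 0 < inv p -> exists (A B : 'I_n),
  B = A.+1 :> nat /\ p^-1 B < p^-1 A.
Proof.
rewrite /inv card_gt0 => /set0Pn [[x y]]; rewrite inE /= => /andP[hxy hp].
pose f j := match (insub j : option 'I_n) with Some o => nat_of_ord (p^-1 o) | None => 0 end.
have fE : forall o : 'I_n, f o = p^-1 o by move=> o; rewrite /f valK.
have := @nat_descent f (p y) (p x) hp; rewrite !fE !permK => /(_ hxy) [j [h1 h2 h3]].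
have hj1 : j.+1 < n by have := ltn_ord (p x); lia.
have hj : j < n by lia.
exists (Ordinal hj), (Ordinal hj1); split => //.
by move: h3; rewrite -(fE (Ordinal hj)) -(fE (Ordinal hj1)).
Qed.

Lemma bubble n (p : 'S_n) : exists b, [/\ valid_word n b, word_perm n b = p & size b = inv p].
Proof.
move: {2}(inv p) (erefl (inv p)) => m.
elim: m p => [|m IH] p hm.
  by exists [::]; split => //; rewrite ?hm // (inv0 hm) wp_nil.
have [A [B [hAB hlt]]] := descent (p := p) (ltac:(lia)).
have := inv_step p hAB; rewrite ltnNge (ltnW hlt) /= => hq.
have [b [hv hw hs]] := IH (p * tperm A B) ltac:(lia).
have hi : 0 < B < n by rewrite ltn_ord hAB.
have [A' [B' [hA' hB' hs']]] := sigmaE hi.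
have eA : A' = A by apply: val_inj; rewrite /= hA' hAB.
have eB : B' = B by apply: val_inj; rewrite /= hB'.
exists (rcons b B); split.
- by rewrite /valid_word all_rcons hi.
- by rewrite wp_rcons hw hs' eA eB -mulgA tperm2 mulg1.
- by rewrite size_rcons hs; lia.
Qed.

Lemma reduced_size n (w : 'S_n) a : reduced_word w a -> size a = inv w.
Proof.
case=> hv hw hmin; have [b [hb hbw hbs]] := bubble w.
have := hmin b hb hbw; have := inv_le hv; rewrite hw; lia.
Qed.

Lemma reduced_asc n (w : 'S_n) c i d : reduced_word w (c ++ i :: d) -> asc (word_perm n c) i.
Proof.
move=> hr; have hs := reduced_size hr; case: hr => hv hw _.
move: hv; rewrite /valid_word all_cat /= => /andP[hc /andP[hi hd]].
have [A [B [hA hB hsig]]] := sigmaE hi.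
apply/(asc_iff _ hA hB).
have hAB : B = A.+1 :> nat by rewrite hA hB; case: (i) hi.
have := inv_step (word_perm n c) hAB; case: ifP => // _ hq.
have h1 := inv_le hc.
have := inv_le_gen (word_perm n c * tperm A B) hd.
rewrite -hsig -mulgA -wp_cons -wp_cat hw -hs size_cat /= hsig; lia.
Qed.


Section S.
Variables (n k : nat).
Implicit Types (p q : 'S_n).

Definition G p := [forall x : 'I_n, (p x < k) ==> (x <= k)].
Definition mL p := [forall x : 'I_n, (p x == k :> nat) ==> (k < x)].
Definition Q p := (G p && mL p) || ~~ G p.

Lemma notGP p : reflect (exists x : 'I_n, p x < k /\ k < x) (~~ G p).
Proof.
apply: (iffP forallPn) => [[x]|[x [h1 h2]]]; last by exists x; rewrite h1 /= -ltnNge.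
by rewrite negb_imply -ltnNge => /andP[h1 h2]; exists x.
Qed.

Lemma stepE p i : 0 < i < n -> exists A B : 'I_n,
  [/\ (A : nat) = i.-1, (B : nat) = i & forall x, (p * sigma n i) x = tperm A B (p x)].
Proof.
move=> hi; have [A [B [hA hB ->]]] := sigmaE hi.
by exists A, B; split => // x; rewrite permM.
Qed.

Lemma tpermD' (T : finType) (x y z : T) : z <> x -> z <> y -> tperm x y z = z.
Proof. by move=> h1 h2; apply: tpermD; apply/eqP => e; [apply: h1|apply: h2]. Qed.

Lemma L1 p i : 0 < i < n -> asc p i -> ~~ G p -> ~~ G (p * sigma n i).
Proof.
move=> hi ha /notGP [x [h1 h2]]; have [A [B [hA hB hq]]] := stepE p hi.
apply/notGP.
case: (tpermP A B (p x)) => [e|e|e1 e2].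
- have ex : p x = i.-1 :> nat by rewrite e.
  case: (ltnP i k) => hik.
    by exists x; rewrite hq e tpermL; split => //; lia.
  pose y := p^-1 B.
  have ey : p y = i :> nat by rewrite permKV.
  have := ha _ _ ex ey => hxy.
  by exists y; rewrite hq permKV tpermR; split => //; lia.
- by exists x; rewrite hq e tpermR; split => //; move: h1; rewrite e; lia.
- by exists x; rewrite hq tpermD'.
Qed.

Lemma LG p i : 0 < i < n -> i != k -> G p -> G (p * sigma n i).
Proof.
move=> hi hik /forallP hG; have [A [B [hA hB hq]]] := stepE p hi.
apply/forallP => x; apply/implyP; rewrite hq.
case: (tpermP A B (p x)) => [e|e|e1 e2] h.
- have := hG x; rewrite e; move: hik h => /eqP; rewrite hA hB; move=> hik h /implyP; apply; lia.
- have := hG x; rewrite e; move: hik h => /eqP; rewrite hA hB; move=> hik h /implyP; apply; lia.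
- by have := hG x => /implyP; apply.
Qed.

Lemma LmL p i : 0 < i < n -> i != k -> i != k.+1 -> mL p -> mL (p * sigma n i).
Proof.
move=> hi hik hik1 /forallP hm; have [A [B [hA hB hq]]] := stepE p hi.
apply/forallP => x; apply/implyP; rewrite hq.
case: (tpermP A B (p x)) => [e|e|e1 e2] /eqP h.
- by move: hik hik1 => /eqP + /eqP; lia.
- by move: hik hik1 => /eqP + /eqP; lia.
- by have := hm x => /implyP; apply; apply/eqP.
Qed.

Lemma L3 p : k.+1 < n -> asc p k.+1 -> Q (p * sigma n k.+1).
Proof.
move=> hkn ha; have hi : 0 < k.+1 < n by rewrite hkn.
case hG: (G p); last first.
  by rewrite /Q; apply/orP; right; apply: L1 => //; rewrite hG.
rewrite /Q; apply/orP; left; rewrite LG //; last by apply/eqP; lia.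
have [A [B [hA hB hq]]] := stepE p hi.
apply/forallP => x; apply/implyP; rewrite hq.
case: (tpermP A B (p x)) => [e|e|e1 e2] /eqP h.
- by move: h; rewrite hB /=; lia.
- have ex : p x = k.+1 :> nat by rewrite e hB.
  pose y := p^-1 A.
  have ey : p y = k :> nat by rewrite permKV hA.
  have hyx := ha _ _ ey ex.
  rewrite ltnNge; apply/negP => hxk.
  move/forallP: hG => hG.
  have sub : [set p^-1 j | j in [set j : 'I_n | j < k.+2]] \subset [set z : 'I_n | z < k.+1].
    apply/subsetP => z /imsetP [j]; rewrite !inE => hj ->.
    case: (ltngtP j k) => hjk.
    + by have := hG (p^-1 j); rewrite permKV hjk /=.
    + have ej : j = B by apply: val_inj; rewrite /= hB; lia.
      by rewrite ej -e permK; lia.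
    + have ej : j = A by apply: val_inj; rewrite /= hA; lia.
      by rewrite ej; rewrite /y in hyx; lia.
  have := subset_leq_card sub.
  rewrite card_imset; last exact: perm_inj.
  by rewrite !card_lt //; lia.
- by exfalso; apply: e1; apply: val_inj; rewrite /= h; rewrite /= in hA; rewrite hA.
Qed.

Lemma L4 p : 0 < k -> k < n -> Q p -> asc p k -> ~~ G (p * sigma n k).
Proof.
move=> hk hkn hQ ha; have hi : 0 < k < n by rewrite hk hkn.
case/orP: hQ => [/andP[hG /forallP hm]|hG]; last exact: L1.
have [A [B [hA hB hq]]] := stepE p hi.
apply/notGP; exists (p^-1 B); rewrite hq permKV tpermR; split; first by rewrite hA; lia.
by have := hm (p^-1 B) => /implyP; apply; rewrite permKV hB.
Qed.

Lemma L2 p i : 0 < k -> k.+1 < n -> 0 < i < n -> asc p i -> Q p -> Q (p * sigma n i).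
Proof.
move=> hk hkn hi ha hQ.
case: (eqVneq i k) => [e|hik].
  by subst i; rewrite /Q; apply/orP; right; apply: L4 => //; lia.
case: (eqVneq i k.+1) => [e|hik1]; first by subst i; exact: L3.
case/orP: hQ => [/andP[hG hm]|hG].
- by rewrite /Q LG ?LmL.
- by rewrite /Q L1 ?orbT.
Qed.

Definition G' p := [forall x : 'I_n, (k < p x) ==> (k <= x)].
Definition mS p := [forall x : 'I_n, (p x == k :> nat) ==> (x < k)].
Definition Q' p := (G' p && mS p) || ~~ G' p.

Lemma notG'P p : reflect (exists x : 'I_n, k < p x /\ x < k) (~~ G' p).
Proof.
apply: (iffP forallPn) => [[x]|[x [h1 h2]]]; last by exists x; rewrite h1 /= -ltnNge.
by rewrite negb_imply -ltnNge => /andP[h1 h2]; exists x.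
Qed.

Lemma L1' p i : 0 < i < n -> asc p i -> ~~ G' p -> ~~ G' (p * sigma n i).
Proof.
move=> hi ha /notG'P [x [h1 h2]]; have [A [B [hA hB hq]]] := stepE p hi.
apply/notG'P.
case: (tpermP A B (p x)) => [e|e|e1 e2].
- by exists x; rewrite hq e tpermL; split => //; move: h1; rewrite e; lia.
- have ex : p x = i :> nat by rewrite e.
  case: (ltnP k i.-1) => hik.
    by exists x; rewrite hq e tpermR; split => //; lia.
  pose y := p^-1 A.
  have ey : p y = i.-1 :> nat by rewrite permKV.
  have := ha _ _ ey ex => hxy.
  by exists y; rewrite hq permKV tpermL; split => //; lia.
- by exists x; rewrite hq tpermD'.
Qed.

Lemma LG' p i : 0 < i < n -> i != k.+1 -> G' p -> G' (p * sigma n i).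
Proof.
move=> hi hik /forallP hG; have [A [B [hA hB hq]]] := stepE p hi.
apply/forallP => x; apply/implyP; rewrite hq.
case: (tpermP A B (p x)) => [e|e|e1 e2] h.
- have := hG x; rewrite e; move: hik h => /eqP; rewrite hA hB; move=> hik h /implyP; apply; lia.
- have := hG x; rewrite e; move: hik h => /eqP; rewrite hA hB; move=> hik h /implyP; apply; lia.
- by have := hG x => /implyP; apply.
Qed.

Lemma LmS p i : 0 < i < n -> i != k -> i != k.+1 -> mS p -> mS (p * sigma n i).
Proof.
move=> hi hik hik1 /forallP hm; have [A [B [hA hB hq]]] := stepE p hi.
apply/forallP => x; apply/implyP; rewrite hq.
case: (tpermP A B (p x)) => [e|e|e1 e2] /eqP h.
- by move: hik hik1 => /eqP + /eqP; lia.
- by move: hik hik1 => /eqP + /eqP; lia.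
- by have := hm x => /implyP; apply; apply/eqP.
Qed.

Lemma L3' p : 0 < k -> k < n -> asc p k -> Q' (p * sigma n k).
Proof.
move=> hk hkn ha; have hi : 0 < k < n by rewrite hk hkn.
case hG: (G' p); last first.
  by rewrite /Q'; apply/orP; right; apply: L1' => //; rewrite hG.
rewrite /Q'; apply/orP; left; rewrite LG' //; last by apply/eqP; lia.
have [A [B [hA hB hq]]] := stepE p hi.
apply/forallP => x; apply/implyP; rewrite hq.
case: (tpermP A B (p x)) => [e|e|e1 e2] /eqP h.
- have ex : p x = k.-1 :> nat by rewrite e hA.
  pose y := p^-1 B.
  have ey : p y = k :> nat by rewrite permKV hB.
  have hxy := ha _ _ ex ey.
  rewrite ltnNge; apply/negP => hxk.
  move/forallP: hG => hG.
  have sub : [set p z | z in [set z : 'I_n | z < k]] \subset [set j : 'I_n | j < k.-1].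
    apply/subsetP => j /imsetP [z]; rewrite !inE => hz ->.
    case: (ltngtP (p z) k) => hjk.
    + rewrite ltnNge; apply/negP => hh.
      have ez : p z = A by apply: val_inj; rewrite /= hA; lia.
      by move: hz; rewrite -(permK p z) ez -e permK; lia.
    + by have := hG z; rewrite hjk /= => hh; lia.
    + have ez : p z = B by apply: val_inj; rewrite /= hB; lia.
      by move: hz; rewrite -(permK p z) ez; rewrite /y in hxy; lia.
  have := subset_leq_card sub.
  rewrite card_imset; last exact: perm_inj.
  by rewrite !card_lt //; lia.
- by move: h; rewrite hA /=; lia.
- by exfalso; apply: e2; apply: val_inj; rewrite /= h; rewrite /= in hB; rewrite hB.
Qed.

Lemma L4' p : k.+1 < n -> Q' p -> asc p k.+1 -> ~~ G' (p * sigma n k.+1).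
Proof.
move=> hkn hQ ha; have hi : 0 < k.+1 < n by rewrite hkn.
case/orP: hQ => [/andP[hG /forallP hm]|hG]; last exact: L1'.
have [A [B [hA hB hq]]] := stepE p hi.
apply/notG'P; exists (p^-1 A); rewrite hq permKV tpermL; split; first by rewrite hB.
by have := hm (p^-1 A) => /implyP; apply; rewrite permKV hA.
Qed.

Lemma L2' p i : 0 < k -> k.+1 < n -> 0 < i < n -> asc p i -> Q' p -> Q' (p * sigma n i).
Proof.
move=> hk hkn hi ha hQ.
case: (eqVneq i k.+1) => [e|hik1].
  by subst i; rewrite /Q'; apply/orP; right; apply: L4'.
case: (eqVneq i k) => [e|hik]; first by subst i; apply: L3' => //; lia.
case/orP: hQ => [/andP[hG hm]|hG].
- by rewrite /Q' LG' ?LmS.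
- by rewrite /Q' L1' ?orbT.
Qed.

End S.


Definition ascw n (p : 'S_n) a := forall c i d, a = c ++ i :: d -> asc (p * word_perm n c) i.

Lemma reduced_ascw n (w : 'S_n) a : reduced_word w a -> ascw (1 : 'S_n) a.
Proof. by move=> hr c i d e; rewrite mul1g; apply: (@reduced_asc n w c i d); rewrite -e. Qed.

Lemma ascw_cat n (p : 'S_n) x y : ascw p (x ++ y) -> ascw (p * word_perm n x) y.
Proof. by move=> h c i d e; rewrite -mulgA -wp_cat; apply: h; rewrite e catA. Qed.

Lemma ascw_prefix n (p : 'S_n) x y : ascw p (x ++ y) -> ascw p x.
Proof. by move=> h c i d e; apply: (h c i (d ++ y)); rewrite e -catA. Qed.

Lemma ascw_cons n (p : 'S_n) i d : ascw p (i :: d) -> asc p i /\ ascw (p * sigma n i) d.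
Proof.
move=> h; split; first by have := h [::] i d erefl; rewrite wp_nil mulg1.
by have := @ascw_cat n p [:: i] d h; rewrite wp_cons wp_nil mulg1.
Qed.

Lemma walk n (R : 'S_n -> bool) :
  (forall p i, 0 < i < n -> asc p i -> R p -> R (p * sigma n i)) ->
  forall a p, valid_word n a -> ascw p a -> R p -> R (p * word_perm n a).
Proof.
move=> hR; elim=> [|i a IH] p /=; first by rewrite wp_nil mulg1.
move=> /andP[hi ha] /ascw_cons [h1 h2] hp.
by rewrite wp_cons mulgA; apply: IH => //; apply: hR.
Qed.

Lemma pattern_gen n (w : 'S_n) (R1 R2 : 'S_n -> bool) x y c1 c2 c3 :
  (forall p, asc p x -> R1 (p * sigma n x)) ->
  (forall p i, 0 < i < n -> asc p i -> R1 p -> R1 (p * sigma n i)) ->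
  (forall p, R1 p -> asc p y -> R2 (p * sigma n y)) ->
  (forall p i, 0 < i < n -> asc p i -> R2 p -> R2 (p * sigma n i)) ->
  reduced_word w (c1 ++ x :: c2 ++ y :: c3) -> R2 w.
Proof.
move=> H1 H2 H3 H4 hr.
have hw := hr; case: hw => hv hw _.
have hc2 : valid_word n c2 by apply/allP => z hz; apply: (allP hv); rewrite mem_cat inE mem_cat hz !orbT.
have hc3 : valid_word n c3 by apply/allP => z hz; apply: (allP hv); rewrite mem_cat inE mem_cat inE hz !orbT.
have := reduced_ascw hr => /ascw_cat; rewrite mul1g => /ascw_cons [a1 a2].
have r1 := walk H2 hc2 (ascw_prefix a2) (H1 _ a1).
move: a2 => /ascw_cat /ascw_cons [a3 a4].
have := walk H4 hc3 a4 (H3 _ r1 a3).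
by rewrite -hw !wp_cat !wp_cons !wp_cat !wp_cons !mulgA.
Qed.

Lemma split_sub (x : nat) s a : subseq (x :: s) a -> exists c d, a = c ++ x :: d /\ subseq s d.
Proof.
elim: a => [|z a IH] //=; case: eqP => [<-|ne] h.
  by exists [::], a.
by have [c [d [-> h']]] := IH h; exists (z :: c), d.
Qed.

Lemma pattern2 (x y : nat) a : subseq [:: x; y] a -> exists c1 c2 c3, a = c1 ++ x :: c2 ++ y :: c3.
Proof.
move=> /split_sub [c [d [-> /split_sub [c' [d' [-> _]]]]]].
by exists c, c', d'.
Qed.

Lemma alt (x y : nat) a : x != y -> subseq [:: x; y] a -> subseq [:: y; x] a ->
  subseq [:: x; y; x] a \/ subseq [:: y; x; y] a.
Proof.
move=> hxy; elim: a => [|z a IH] //=.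
have hyx : (y == x) = false by rewrite eq_sym (negbTE hxy).
case: (eqVneq x z) => [<-|hxz].
  by rewrite hyx => _ h2; left.
case: (eqVneq y z) => [e|hyz] h1 h2.
  by right.
exact: IH h1 h2.
Qed.

Lemma commute_wp n g s : (forall y, y \in s -> commute g (sigma n y)) -> commute g (word_perm n s).
Proof.
elim: s => [|y s IH] h; first by rewrite wp_nil; exact: commute1.
rewrite wp_cons; apply: commuteM; first by apply: h; rewrite inE eqxx.
by apply: IH => z hz; apply: h; rewrite inE hz orbT.
Qed.

Lemma sort_comm n (P : pred nat) a :
  (forall x y, subseq [:: x; y] a -> ~~ P x -> P y -> commute (sigma n x) (sigma n y)) ->
  word_perm n a = word_perm n (filter P a) * word_perm n (filter (predC P) a).
Proof.
elim: a => [|z a IH] h /=; first by rewrite !wp_nil mulg1.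
have h' : forall x y, subseq [:: x; y] a -> ~~ P x -> P y -> commute (sigma n x) (sigma n y).
  by move=> x y hs; apply: h; apply: subseq_trans hs (subseq_cons _ _).
case hz: (P z) => /=.
  by rewrite !wp_cons IH // mulgA.
rewrite !wp_cons IH // !mulgA; congr (_ * _).
apply: commute_wp => y; rewrite mem_filter => /andP[hy ya].
by apply: h => //; [rewrite /= eqxx sub1seq | rewrite hz].
Qed.


Lemma sigma_fix n i (x : 'I_n) : (x : nat) <> i.-1 -> (x : nat) <> i -> sigma n i x = x.
Proof.
move=> h1 h2; case hi: (0 < i < n); last by rewrite sigma_invalid ?hi // perm1.
have [A [B [hA hB ->]]] := sigmaE hi.
by apply: tpermD' => e; [apply: h1; rewrite e | apply: h2; rewrite e].
Qed.

Lemma wp_fix n a (x : 'I_n) : (forall i, i \in a -> (x : nat) <> i.-1 /\ (x : nat) <> i) ->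
  word_perm n a x = x.
Proof.
elim: a => [|i a IH] h; first by rewrite wp_nil perm1.
rewrite wp_cons permM.
have [h1 h2] := h i (mem_head _ _).
rewrite (sigma_fix h1 h2); apply: IH => j hj; apply: h; by rewrite inE hj orbT.
Qed.

Lemma P2_G n k u v (x : 'I_n) : all (fun i => i <= k) u -> all (fun i => k.+1 <= i) v ->
  word_perm n (u ++ v) x < k -> x <= k.
Proof.
move=> hu hv; rewrite wp_cat permM.
case: (leqP x k) => // hx.
rewrite (wp_fix (a := u)); last by move=> i /(allP hu) hi; lia.
move=> hz.
have e : word_perm n v (word_perm n v x) = word_perm n v x.
  by apply: wp_fix => i /(allP hv) hi; lia.
by move: hz; rewrite (perm_inj e); lia.
Qed.

Lemma P2_G' n k u v (x : 'I_n) : all (fun i => k.+1 <= i) u -> all (fun i => i <= k) v ->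
  k < word_perm n (u ++ v) x -> k <= x.
Proof.
move=> hu hv; rewrite wp_cat permM.
case: (leqP k x) => // hx.
rewrite (wp_fix (a := u)); last by move=> i /(allP hu) hi; lia.
move=> hz.
have e : word_perm n v (word_perm n v x) = word_perm n v x.
  by apply: wp_fix => i /(allP hv) hi; lia.
by move: hz; rewrite (perm_inj e); lia.
Qed.


Lemma reduced_filter n (w : 'S_n) a (P : pred nat) : reduced_word w a ->
  word_perm n a = word_perm n (filter P a) * word_perm n (filter (predC P) a) ->
  reduced_word w (filter P a ++ filter (predC P) a).
Proof.
case=> hv hw hmin e; split.
- apply/allP => z; rewrite mem_cat !mem_filter => /orP[/andP[_ hz]|/andP[_ hz]]; exact: (allP hv) _ ltac:(eassumption).
- by rewrite wp_cat -e.
- by move=> b hb hbw; rewrite size_cat !size_filter count_predC; exact: hmin.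
Qed.

Local Close Scope group_scope.

Theorem proposition3p10 (n : nat) (w : 'S_n) (k : nat) :
  supp w k -> supp w k.+1 ->
  let P1 := exists a, reduced_word w a /\
              (subseq [:: k; k.+1; k] a \/ subseq [:: k.+1; k; k.+1] a) in
  let P2 := exists u v, reduced_word w (u ++ v) /\
              ((all (fun i => i <= k) u /\ all (fun i => k.+1 <= i) v) \/
               (all (fun i => k.+1 <= i) u /\ all (fun i => i <= k) v)) in
  (P1 \/ P2) /\ ~ (P1 /\ P2).
Proof.
move=> [a0 [hr0 hka]] [a1 [hr1 hkb]] P1 P2.
have hk : 0 < k < n by case: hr0 => hv _ _; exact: (allP hv) _ ltac:(eassumption).
have hk1n : 0 < k.+1 < n by case: hr1 => hv _ _; exact: (allP hv) _ ltac:(eassumption).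
have hk0 : 0 < k by case/andP: hk.
have hkn : k.+1 < n by case/andP: hk1n.
split.
- case: (classic P1) => hP1; [by left | right].
  have n1 : ~~ subseq [:: k; k.+1; k] a0.
    by apply/negP => hs; apply: hP1; exists a0; split => //; left.
  have n2 : ~~ subseq [:: k.+1; k; k.+1] a0.
    by apply/negP => hs; apply: hP1; exists a0; split => //; right.
  have hne : k != k.+1 by apply/eqP; lia.
  case hs1: (subseq [:: k.+1; k] a0).
  + case hs2: (subseq [:: k; k.+1] a0).
      by exfalso; case: (alt hne hs2 hs1) => h; [move: n1 | move: n2]; rewrite h.
    pose P := fun i : nat => k < i.
    exists (filter P a0), (filter (predC P) a0); split.
      apply: reduced_filter => //; apply: sort_comm => x y hxy.
      rewrite /P -leqNgt => hx hy.
      case: (eqVneq x k) => [ex|nx].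
        case: (eqVneq y k.+1) => [ey|ny]; first by move: hxy; rewrite ex ey hs2.
        by apply: commute_sym; apply: sigma_comm; move: ny => /eqP; lia.
      by apply: commute_sym; apply: sigma_comm; move: nx => /eqP; lia.
    right; split.
      by apply/allP => z; rewrite mem_filter => /andP[hz _].
    by apply/allP => z; rewrite mem_filter /= => /andP[hz _]; move: hz; rewrite /P; lia.
  + pose P := fun i : nat => i <= k.
    exists (filter P a0), (filter (predC P) a0); split.
      apply: reduced_filter => //; apply: sort_comm => x y hxy.
      rewrite /P -ltnNge => hx hy.
      case: (eqVneq x k.+1) => [ex|nx].
        case: (eqVneq y k) => [ey|ny]; first by move: hxy; rewrite ex ey hs1.
        by apply: sigma_comm; move: ny => /eqP; lia.
      by apply: sigma_comm; move: nx => /eqP; lia.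
    left; split.
      by apply/allP => z; rewrite mem_filter => /andP[hz _].
    by apply/allP => z; rewrite mem_filter /= => /andP[hz _]; move: hz; rewrite /P; lia.
- move=> [[a [hr hp]] [u [v [hr2 hform]]]].
  have s1 : subseq [:: k.+1; k] a.
    case: hp => hp; apply: subseq_trans hp.
      exact: subseq_cons.
    exact: (cat_subseq (subseq_refl [:: k.+1; k]) (sub0seq [:: k.+1])).
  have s2 : subseq [:: k; k.+1] a.
    case: hp => hp; apply: subseq_trans hp.
      exact: (cat_subseq (subseq_refl [:: k; k.+1]) (sub0seq [:: k])).
    exact: subseq_cons.
  case: hr2 => _ hw2 _.
  case: hform => [[hu hv]|[hu hv]].
  + have hG : @G n k w.
      by apply/forallP => x; apply/implyP; rewrite -hw2; apply: P2_G.
    have [c1 [c2 [c3 e]]] := pattern2 s1; rewrite e in hr.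
    suff : ~~ @G n k w by rewrite hG.
    apply: (@pattern_gen n w (@Q n k) (fun p => ~~ @G n k p) k.+1 k c1 c2 c3 _ _ _ _ hr).
    * by move=> p ha; apply: L3.
    * by move=> p i hi ha hq; apply: L2.
    * by move=> p hq ha; apply: L4 => //; lia.
    * by move=> p i hi ha hq; apply: L1.
  + have hG : @G' n k w.
      by apply/forallP => x; apply/implyP; rewrite -hw2; apply: P2_G'.
    have [c1 [c2 [c3 e]]] := pattern2 s2; rewrite e in hr.
    suff : ~~ @G' n k w by rewrite hG.
    apply: (@pattern_gen n w (@Q' n k) (fun p => ~~ @G' n k p) k k.+1 c1 c2 c3 _ _ _ _ hr).
    * by move=> p ha; apply: L3' => //; lia.
    * by move=> p i hi ha hq; apply: L2'.
    * by move=> p hq ha; apply: L4'.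
    * by move=> p i hi ha hq; apply: L1'.
Qed.
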